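(* There is an absolute constant $K>0$ such that the following holds. Let $n\ge1$, $k=\lfloor\sqrt n\rfloor$, and let $M_n$ be the $\binom{n}{k}\times n$ matrix whose rows are all distinct $0/1$ vectors of length $n$ with exactly $k$ ones. Let $R$ be a row player's payoff matrix (entries in $[0,1]$) that contains $M_n$ as a submatrix (on some set $S$ of rows and some set $T$ of columns), such that every row of $R$ not in $S$ is identically $0$, and for every row in $S$, every entry in a column not in $T$ equals $1$. Let $p,p_r,p_c\in[0,1]$. Then for every mixed strategy $\mathbf{x}$ of the row player allocating probability at least $p_r$ to rows not in $S$, there exists a column $\ell\in T$ such that for every mixed strategy $\mathbf{y}$ of the column player that allocates probability at least $p_c$ to columns not in $T$ and probability $p$ to column $\ell$, the row player's regret $\max_i\mathbf{e}_i^TR\mathbf{y}-\mathbf{x}^TR\mathbf{y}$ is at least $p-K/\sqrt n+p_rp_c$.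
   Context: Mixed strategies are probability vectors over rows/columns; $\mathbf{e}_i$ is the $i$-th unit vector; the row player's payoff is $\mathbf{x}^TR\mathbf{y}$ and his regret is the payoff of his best response to $\mathbf{y}$ minus $\mathbf{x}^TR\mathbf{y}$. *)

(* Defs.v *)
From Stdlib Require Import Reals.
From HB Require Import structures.
From mathcomp Require Import all_boot all_order all_algebra.
From mathcomp Require Import Rstruct.
Set Implicit Arguments. Unset Strict Implicit. Unset Printing Implicit Defensive.
Import Order.TTheory GRing.Theory Num.Theory.
Local Open Scope ring_scope.

Definition ksqrt (n : nat) : nat := Nat.sqrt n.

(* M is "M_n": a 'C(n,k) x n matrix whose rows are pairwise distinct
   0/1 vectors with exactly k ones (so, by counting, all of them). *)
Definition is_Mn (n : nat) (M : 'M[R]_('C(n, ksqrt n), n)) : Prop :=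
  [/\ (forall a j, M a j = 0 \/ M a j = 1),
      (forall a, #|[set j | M a j == 1]| = ksqrt n) &
      (forall a b, row a M = row b M -> a = b)].

Definition mixed (m : nat) (x : 'I_m -> R) : Prop :=
  (forall i, 0 <= x i) /\ \sum_i x i = 1.

Definition payoff (m N : nat) (A : 'M[R]_(m, N)) (x : 'I_m -> R) (y : 'I_N -> R) : R :=
  \sum_i \sum_j x i * A i j * y j.

Definition pure_payoff (m N : nat) (A : 'M[R]_(m, N)) (i : 'I_m) (y : 'I_N -> R) : R :=
  \sum_j A i j * y j.

(* max_i e_i^T R y.  The neutral element 0 is harmless here: all payoff
   entries lie in [0,1] and strategies are nonnegative, and m >= 1. *)
Definition best_payoff (m N : nat) (A : 'M[R]_(m, N)) (y : 'I_N -> R) : R :=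
  \big[Num.max/0]_i pure_payoff A i y.

Definition regret (m N : nat) (A : 'M[R]_(m, N)) (x : 'I_m -> R) (y : 'I_N -> R) : R :=
  best_payoff A y - payoff A x y.

(* Main.v *)
Require Import Defs.
From Stdlib Require Import Reals.
From HB Require Import structures.
From mathcomp Require Import all_boot all_order all_algebra.
From mathcomp Require Import Rstruct.
From mathcomp Require Import ring lra zify.
Import Order.TTheory GRing.Theory Num.Theory.
Local Open Scope ring_scope.

Lemma avg_min (I : finType) (P : {pred I}) (f : I -> R) (i0 : I) :
  P i0 -> exists2 i, P i & #|P|%:R * f i <= \sum_(j in P) f j.
Proof.
move=> Pi0; case: (arg_minP f Pi0) => i Pi Hmin; exists i => //.
rewrite mulr_natl -sumr_const; apply: ler_sum => j Pj; exact: Hmin.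
Qed.

Lemma sum_setT (I : finType) (f : I -> R) :
  \sum_(i in [set: I]) f i = \sum_i f i.
Proof. by apply: eq_bigl => i; rewrite in_setT. Qed.

Lemma sum_sub (I : finType) (B : {set I}) (f : I -> R) :
  (forall i, 0 <= f i) -> \sum_(i in B) f i <= \sum_i f i.
Proof.
move=> f0; rewrite [X in _ <= X](bigID (fun i => i \in B)) /=.
by rewrite lerDl sumr_ge0.
Qed.

Lemma swap_in n k (z : 'I_n -> R) (B : {set 'I_n}) (l : 'I_n) :
  (0 < k)%N -> #|B| = k -> (forall b, 0 <= z b) -> \sum_b z b <= 1 ->
  exists B' : {set 'I_n}, [/\ #|B'| = k, l \in B' &
    \sum_(b in B) z b + (l \notin B)%:R * z l - (k%:R)^-1 <= \sum_(b in B') z b].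
Proof.
move=> k0 cB z0 z1.
have kpos : 0 < (k%:R : R) by rewrite ltr0n.
have ik0 : 0 <= (k%:R : R)^-1 by rewrite invr_ge0 ltW.
case: (boolP (l \in B)) => lB.
  exists B; split => //=; rewrite mul0r addr0; lra.
have : (0 < #|B|)%N by rewrite cB.
case/card_gt0P => c0 c0B.
case: (@avg_min _ (mem B) z _ c0B) => c cB'' hc'.
have cB' : c \in B := cB''.
have hc : #|B|%:R * z c <= \sum_(j in B) z j := hc'.
have hc1 : z c <= (k%:R)^-1.
  have h : z c <= (k%:R)^-1 * 1.
    rewrite ler_pdivlMl //; rewrite -cB; apply: (le_trans hc).
    exact: le_trans (@sum_sub _ B z z0) z1.
  by rewrite mulr1 in h.
have lBc : l \notin B :\ c by rewrite in_setD1 (negbTE lB) andbF.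
exists (l |: (B :\ c)); split.
- by rewrite cardsU1 lBc -cB (cardsD1 c B) cB'.
- by rewrite setU11.
- rewrite big_setU1 //= (big_setD1 c cB') /= mul1r; lra.
Qed.

Lemma Mn_surj n (M : 'M[R]_('C(n, ksqrt n), n)) : is_Mn M ->
  forall B : {set 'I_n}, #|B| = ksqrt n -> exists a, [set j | M a j == 1] = B.
Proof.
case=> h01 hcard hinj B cB.
pose f := fun a => [set j | M a j == 1].
have finj : injective f.
  move=> a b /setP e; apply: hinj; apply/rowP => j; rewrite !mxE.
  have := e j; rewrite !inE.
  case: (h01 a j) => ->; case: (h01 b j) => -> //=;
    rewrite ?eqxx eq_sym oner_eq0 //.
have e : f @: setT = [set A : {set 'I_n} | #|A| == ksqrt n].
  apply/eqP; rewrite eqEcard card_draws card_ord card_imset // cardsT card_ord leqnn andbT.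
  by apply/subsetP => _ /imsetP [a _ ->]; rewrite inE hcard.
have : B \in f @: setT by rewrite e inE cB.
by case/imsetP => a _ ->; exists a.
Qed.

Theorem corollary1 :
  exists K : R, 0 < K /\
  forall (n : nat), (1 <= n)%N ->
  forall (m N : nat) (A : 'M[R]_(m, N)) (S : {set 'I_m}) (T : {set 'I_N})
         (M : 'M[R]_('C(n, ksqrt n), n))
         (rho : 'I_('C(n, ksqrt n)) -> 'I_m) (sigma : 'I_n -> 'I_N),
    is_Mn M ->
    injective rho -> injective sigma ->
    S = rho @: setT -> T = sigma @: setT ->
    (forall a b, A (rho a) (sigma b) = M a b) ->
    (forall i j, 0 <= A i j <= 1) ->
    (forall i j, i \notin S -> A i j = 0) ->
    (forall i j, i \in S -> j \notin T -> A i j = 1) ->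
  forall p pr pc : R, 0 <= p <= 1 -> 0 <= pr <= 1 -> 0 <= pc <= 1 ->
  forall x : 'I_m -> R, mixed x -> pr <= \sum_(i | i \notin S) x i ->
  exists2 l : 'I_N, l \in T &
    forall y : 'I_N -> R, mixed y -> pc <= \sum_(j | j \notin T) y j -> y l = p ->
      p - K / Num.sqrt (n%:R) + pr * pc <= regret A x y.
Proof.
exists 3; split; first lra.
move=> n n1 m N A S T M rho sigma HM rinj sinj HS HT HAM A01 A0 A1
  p pr pc hp hpr hpc x [x0 x1] hprx.
case/andP: hp => hp0 hp1; case/andP: hpr => hpr0 hpr1; case/andP: hpc => hpc0 hpc1.
have HM' := HM; case: HM' => h01 hcard _.
set k := ksqrt n.
have [kk kn] : (k * k <= n)%N /\ (n < k.+1 * k.+1)%N.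
  have [h1 h2] := Nat.sqrt_spec n (Nat.le_0_l n).
  rewrite /k /ksqrt; split; lia.
have k1 : (1 <= k)%N by case: k kk kn => [|k'] //=; rewrite muln0 ltnNge n1.
have kpos : 0 < (k%:R : R) by rewrite ltr0n.
pose Sa a := [set j | M a j == 1].
have Mv : forall a b, M a b = (b \in Sa a)%:R.
  move=> a b; rewrite inE; case: (h01 a b) => ->; rewrite ?eqxx //.
  by rewrite eq_sym oner_eq0.
pose xa a := x (rho a).
have xa0 : forall a, 0 <= xa a by move=> a; exact: x0.
pose w b := \sum_a xa a * M a b.
pose xS := \sum_a xa a.
have rinj' : {in [set: 'I_('C(n, k))] &, injective rho} by move=> ? ? _ _; apply: rinj.
have sinj' : {in [set: 'I_n] &, injective sigma} by move=> ? ? _ _; apply: sinj.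
have xSe : \sum_(i in S) x i = xS by rewrite HS big_imset //= sum_setT.
have xsum : xS + \sum_(i | i \notin S) x i = 1.
  by rewrite -xSe -x1 [X in _ = X](bigID (fun i => i \in S)).
have w0 : forall b, 0 <= w b.
  move=> b; apply: sumr_ge0 => a _; rewrite Mv mulr_ge0 //.
have sumw : \sum_b w b = k%:R * xS.
  rewrite /w exchange_big /= /xS mulr_sumr; apply: eq_bigr => a _.
  rewrite -mulr_sumr mulrC; congr (_ * _).
  have -> : (k%:R : R) = #|Sa a|%:R by rewrite hcard.
  rewrite -sumr_const [RHS]big_mkcond /=; apply: eq_bigr => b _.
  by rewrite Mv; case: (b \in _).
have [l0 _ hl0] := @avg_min _ predT w (Ordinal n1) erefl.
have hl0' : n%:R * w l0 <= k%:R * xS.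
  rewrite -sumw; move: hl0; rewrite card_ord.
  by congr (_ <= _); apply: eq_bigl.
exists (sigma l0); first by rewrite HT imset_f.
move=> y [y0 y1] hpcy hyl.
pose z b := y (sigma b).
have z0 : forall b, 0 <= z b by move=> b; exact: y0.
pose Yout := \sum_(j | j \notin T) y j.
have Tsum : \sum_(j in T) y j = \sum_b z b by rewrite HT big_imset //= sum_setT.
have ysum : \sum_b z b + Yout = 1.
  by rewrite -Tsum -y1 [X in _ = X](bigID (fun j => j \in T)).
have Yout0 : 0 <= Yout by apply: sumr_ge0.
have z1 : \sum_b z b <= 1 by lra.
have pureS : forall a, pure_payoff A (rho a) y = \sum_(b in Sa a) z b + Yout.
  move=> a; rewrite /pure_payoff (bigID (fun j => j \in T)) /=; congr (_ + _).
    rewrite HT big_imset //= sum_setT [RHS]big_mkcond /=; apply: eq_bigr => b _.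
    by rewrite HAM Mv; case: (b \in Sa a); rewrite ?mul1r ?mul0r.
  apply: eq_bigr => j jT; rewrite A1 ?mul1r //.
  by rewrite HS imset_f.
have pure0 : forall i, i \notin S -> pure_payoff A i y = 0.
  by move=> i iS; apply: big1 => j _; rewrite A0 // mul0r.
have payE : payoff A x y = \sum_a xa a * pure_payoff A (rho a) y.
  have e : forall i, \sum_j x i * A i j * y j = x i * pure_payoff A i y.
    by move=> i; rewrite /pure_payoff mulr_sumr; apply: eq_bigr => j _; rewrite mulrA.
  rewrite /payoff (eq_bigr _ (fun i _ => e i)) (bigID (fun i => i \in S)) /=.
  rewrite [X in _ + X]big1 ?addr0; last by move=> i /pure0 ->; rewrite mulr0.
  by rewrite HS big_imset //= sum_setT.
have bestge : forall i, pure_payoff A i y <= best_payoff A y.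
  by move=> i; rewrite /best_payoff; apply: le_bigmax.
have key : forall a, pure_payoff A (rho a) y + (1 - M a l0) * p - (k%:R)^-1
                      <= best_payoff A y.
  move=> a; have [B' [cB' lB' hB']] :=
    @swap_in n k z (Sa a) l0 k1 (hcard a) z0 z1.
  have [a' ea'] := @Mn_surj _ M HM _ cB'.
  apply: le_trans (bestge (rho a')); rewrite !pureS.
  have -> : Sa a' = B' by [].
  move: hB'; rewrite Mv /z hyl; case: (l0 \in Sa a) => /=; lra.
have a0 : 'I_('C(n, k)) by exists 0%N; rewrite bin_gt0; apply: leq_trans kk; rewrite leq_pmulr.
have bestp : p + Yout <= best_payoff A y.
  have [B' [cB' lB' hB']] := @swap_in n k z (Sa a0) l0 k1 (hcard a0) z0 z1.
  have [a' ea'] := @Mn_surj _ M HM _ cB'.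
  apply: le_trans (bestge (rho a')); rewrite !pureS.
  have -> : Sa a' = B' by [].
  rewrite (big_setD1 l0 lB') /= /z hyl.
  have : 0 <= \sum_(i in B' :\ l0) y (sigma i) by apply: sumr_ge0.
  lra.
set best := best_payoff A y.
set pay := payoff A x y.
have E1 : pay + p * xS - p * w l0 - (k%:R)^-1 * xS <= xS * best.
  have : \sum_a xa a * (pure_payoff A (rho a) y + (1 - M a l0) * p - (k%:R)^-1)
           <= \sum_a xa a * best.
    by apply: ler_sum => a _; apply: ler_wpM2l => //; apply: key.
  rewrite -mulr_suml mulrC.
  suff -> : \sum_a xa a * (pure_payoff A (rho a) y + (1 - M a l0) * p - (k%:R)^-1)
        = pay + p * xS - p * w l0 - (k%:R)^-1 * xS by [].
  rewrite /pay payE /xS /w !mulr_sumr -big_split -!sumrB /=.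
  by apply: eq_bigr => a _; ring.
have xS0 : 0 <= xS by apply: sumr_ge0.
have E2 : (1 - xS) * (p + Yout) <= (1 - xS) * best.
  by apply: ler_wpM2l => //; lra.
have E3 : pr * pc <= (1 - xS) * Yout by apply: ler_pM => //; lra.
have E4 : p * w l0 <= w l0.
  have := w0 l0; nra.
have ik0 : 0 <= (k%:R : R)^-1 by rewrite invr_ge0 ltW.
have E5 : (k%:R)^-1 * xS <= (k%:R : R)^-1 by nra.
have R1 : p - w l0 - (k%:R)^-1 + pr * pc <= regret A x y.
  suff h : p - w l0 - (k%:R)^-1 + pr * pc <= best - pay by exact: h.
  lra.
set s := Num.sqrt (n%:R : R).
have n0 : 0 < (n%:R : R) by rewrite ltr0n.
have s0 : 0 < s by rewrite sqrtr_gt0.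
have ss : s * s = n%:R by rewrite -expr2 sqr_sqrtr // ltW.
have kkR : (k%:R * k%:R <= n%:R :> R) by rewrite -natrM ler_nat.
have knR : (n%:R < (k%:R + 1) * (k%:R + 1) :> R).
  by rewrite natr1 -natrM ltr_nat.
have ks : k%:R <= s by nra.
have sk : s <= 2 * k%:R.
  have h1 : s < k%:R + 1 by nra.
  have h2 : 1 <= (k%:R : R) by rewrite ler1n.
  apply: le_trans (ltW h1) _; lra.
have hw : w l0 <= s^-1.
  have h : s * w l0 <= 1.
    have h2 : s * (s * w l0) <= s * 1.
      rewrite mulrA ss mulr1; apply: le_trans hl0' _.
      have : xS <= 1 by lra.
      nra.
    by rewrite ler_pM2l in h2.
  have : w l0 <= s^-1 * 1 by rewrite ler_pdivlMl.
  by rewrite mulr1.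
have hk : (k%:R : R)^-1 <= 2 * s^-1.
  have : (k%:R : R)^-1 <= s^-1 * (s * (k%:R)^-1).
    by rewrite mulrA mulVf ?mul1r // gt_eqF.
  have : s * (k%:R)^-1 <= 2.
    have : s * (k%:R)^-1 <= 2 * k%:R * (k%:R)^-1.
      by apply: ler_wpM2r.
    by rewrite -mulrA mulfV ?mulr1 // gt_eqF.
  have is0 : 0 <= s^-1 by rewrite invr_ge0 ltW.
  nra.
rewrite -/s; lra.
Qed.
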